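(* Let $X$ be a set and let $\mathcal{L}$ be a nest on $X$. Then $\mathcal{L}$ is interlocking if and only if, for each $L\in\mathcal{L}$, if $X-L$ is a lower set with respect to $\triangleleft_{\mathcal{L}^c}$, then $L$ is a lower set with respect to $\triangleleft_{\mathcal{L}}$.
   Context: A nest on $X$ is a family $\mathcal{L}$ of subsets of $X$ such that for all $M,N\in\mathcal{L}$, either $M\subseteq N$ or $N\subseteq M$. For a family $\mathcal{S}$ of subsets of $X$, define $x \triangleleft_{\mathcal{S}} y$ iff there exists $S\in\mathcal{S}$ with $x\in S$ and $y\notin S$. Let $\mathcal{L}^c=\{X-L : L\in\mathcal{L}\}$. A family $\mathcal{S}$ of subsets of $X$ is interlocking if for every $T\in\mathcal{S}$ with $T=\bigcap\{S : T\subseteq S,\ S\in\mathcal{S}-\{T\}\}$ one has $T=\bigcup\{S : S\subseteq T,\ S\in\mathcal{S}-\{T\}\}$. For a relation $\triangleleft$ on $X$ and $A\subseteq X$, let ${\downarrow}A=\{x\in X : \exists y\in A,\ x\triangleleft y\}$; $A$ is a lower set with respect to $\triangleleft$ if $A={\downarrow}A$. *)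

(* Defs.v *)
From mathcomp Require Import all_boot.
From mathcomp Require Import boolp classical_sets.
Set Implicit Arguments. Unset Strict Implicit. Unset Printing Implicit Defensive.
Local Open Scope classical_set_scope.

Definition nest (X : Type) (L : set (set X)) : Prop :=
  forall M N, L M -> L N -> M `<=` N \/ N `<=` M.

Definition tri (X : Type) (S : set (set X)) (x y : X) : Prop :=
  exists S0, S S0 /\ S0 x /\ ~ S0 y.

Definition compl_fam (X : Type) (L : set (set X)) : set (set X) :=
  [set ~` A | A in L].

(* interlocking: for T in S, if T = /\ {S in S - {T} : T <= S} then
   T = \/ {S in S - {T} : S <= T}.  (Empty intersection = X.) *)
Definition interlocking (X : Type) (S : set (set X)) : Prop :=
  forall T, S T ->
    T = \bigcap_(A in [set A | S A /\ A <> T /\ T `<=` A]) A ->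
    T = \bigcup_(A in [set A | S A /\ A <> T /\ A `<=` T]) A.

Definition down (X : Type) (R : X -> X -> Prop) (A : set X) : set X :=
  [set x | exists2 y, A y & R x y].

Definition lower_set (X : Type) (R : X -> X -> Prop) (A : set X) : Prop :=
  A = down R A.

(* Main.v *)
Require Import Defs.
From mathcomp Require Import all_boot.
From mathcomp Require Import boolp classical_sets.
Local Open Scope classical_set_scope.

Lemma low_iff (X : Type) (L : set (set X)) (hL : nest L) A : L A ->
  lower_set (tri L) A <->
  A = \bigcup_(M in [set M | L M /\ M <> A /\ M `<=` A]) M.
Proof.
move=> LA; rewrite /lower_set; split => h.
- apply/seteqP; split => x.
  + rewrite {1}h => -[y Ay [M [LM [Mx My]]]].
    exists M => //; split => //; split; first by move=> MA; apply: My; rewrite MA.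
    by case: (hL _ _ LM LA) => // AM; exfalso; apply: My; apply: AM.
  + by move=> [M [_ [_ MA]] Mx]; apply: MA.
- apply/seteqP; split => x.
  + rewrite {1}h => -[M [LM [MA MsA]] Mx].
    have [y Ay nMy] : exists2 y, A y & ~ M y.
      apply: contra_notP MA => hn; apply/seteqP; split => // z Az.
      by apply: contra_notP (fun nz => hn (ex_intro2 _ _ z Az nz)).
    by exists y => //; exists M.
  + move=> [y Ay [M [LM [Mx My]]]].
    by case: (hL _ _ LM LA) => [MA|AM]; [apply: MA | exfalso; apply: My; apply: AM].
Qed.

Lemma clow_iff (X : Type) (L : set (set X)) (hL : nest L) A : L A ->
  lower_set (tri (compl_fam L)) (~` A) <->
  A = \bigcap_(M in [set M | L M /\ M <> A /\ A `<=` M]) M.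
Proof.
move=> LA; rewrite /lower_set; split => h.
- apply/seteqP; split => x.
  + by move=> Ax M [_ [_ AM]]; apply: AM.
  + move=> hx; case: (pselect (A x)) => // nAx; exfalso.
    have : (~` A) x by [].
    rewrite {1}h => -[y nAy [C [[M LM <-] [nMx nMy]]]].
    have My : M y by apply: contra_notP nMy.
    apply: nMx; apply: hx; split => //; split; first by move=> MA; apply: nAy; rewrite -MA.
    by case: (hL _ _ LM LA) => // MA; exfalso; apply: nAy; apply: MA.
- apply/seteqP; split => x.
  + move=> nAx; have : ~ (\bigcap_(M in [set M | L M /\ M <> A /\ A `<=` M]) M) x.
      by rewrite -h.
    move=> /existsNP [M /not_implyP [[LM [MA AM]] nMx]].
    have [y My nAy] : exists2 y, M y & ~ A y.
      apply: contra_notP MA => hn; apply/seteqP; split => // z Mz.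
      by apply: contra_notP (fun nz => hn (ex_intro2 _ _ z Mz nz)).
    exists y => //; exists (~` M); split; first by exists M.
    by split => //= /(_ My).
  + move=> [y nAy [C [[M LM <-] [nMx nMy]]]].
    have My : M y by apply: contra_notP nMy.
    case: (hL _ _ LM LA) => [MA|AM]; first by exfalso; apply: nAy; apply: MA.
    by move=> Ax; apply: nMx; apply: AM.
Qed.

Theorem theorem3p5 (X : Type) (L : set (set X)) (hL : nest L) :
  interlocking L <->
  (forall A, L A -> lower_set (tri (compl_fam L)) (~` A) -> lower_set (tri L) A).
Proof.
split.
- move=> hI A LA /(@clow_iff _ _ hL _ LA) h; apply/(@low_iff _ _ hL _ LA); exact: hI.
- move=> h T LT hT; apply/(@low_iff _ _ hL _ LT); apply: h => //; exact/(@clow_iff _ _ hL _ LT).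
Qed.
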